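(* Let $p$ be a prime and let $a,b$ be integers, both coprime to $p$, with $a\neq 1$. For each $n\geq 1$, let $x_n$ denote the smallest positive integer satisfying $a^{x_n}\equiv b \pmod{p^n}$, when one exists. If $x_n$ exists for every $n\geq 1$, then the sequence $(x_n)_{n\geq 1}$ converges in the ring $\mathbb{Z}_p$ of $p$-adic integers, that is, with respect to the $p$-adic absolute value.
   Context: $\mathbb{Z}_p$ denotes the ring of $p$-adic integers, i.e. the completion of $\mathbb{Z}$ with respect to the $p$-adic metric $d(x,y)=e^{-v_p(x-y)}$. Here $v_p$ is the $p$-adic valuation. *)

(* Defs.v *)
From HB Require Import structures.
From mathcomp Require Import all_boot all_order all_algebra.
Set Implicit Arguments. Unset Strict Implicit. Unset Printing Implicit Defensive.
Import Order.TTheory GRing.Theory Num.Theory.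
Local Open Scope ring_scope.

Definition is_least_dlog (p : nat) (a b : int) (n x : nat) : Prop :=
  (0 < x)%N /\ (a ^+ x == b %[mod (p ^ n)%:Z])%Z /\
  (forall y : nat, (0 < y)%N -> (a ^+ y == b %[mod (p ^ n)%:Z])%Z -> (x <= y)%N).

(* A p-adic integer, represented (as the inverse limit of Z/p^k Z) by a
   coherent sequence of integer representatives l k of its residue mod p^k. *)
Definition padic_coherent (p : nat) (l : nat -> int) : Prop :=
  forall k : nat, (l k.+1 == l k %[mod (p ^ k)%:Z])%Z.

(* The integer sequence x converges in Z_p to the p-adic integer l:
   for every k, eventually x n = l mod p^k (i.e. |x n - l|_p <= p^-k). *)
Definition padic_limit (p : nat) (x : nat -> int) (l : nat -> int) : Prop :=
  forall k : nat, exists N : nat, forall n : nat, (N <= n)%N ->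
    (x n == l k %[mod (p ^ k)%:Z])%Z.

Definition padic_converges (p : nat) (x : nat -> int) : Prop :=
  exists l : nat -> int, padic_coherent p l /\ padic_limit p x l.

(* Main.v *)
Require Import Defs.
From HB Require Import structures.
From mathcomp Require Import all_boot all_order all_algebra.
Import Order.TTheory GRing.Theory Num.Theory.
Local Open Scope ring_scope.
From Stdlib Require Import Classical IndefiniteDescription.
Lemma PX (p k : nat) : ((p ^ k)%N%:Z = p%:Z ^+ k).
Proof. by rewrite -natz natrX natz. Qed.

Lemma D1 (c : int) n : (c - 1 %| c ^+ n - 1)%Z.
Proof. by rewrite subrX1; apply: dvdz_mulr. Qed.

Lemma lift1 (p : nat) (c : int) (i : nat) : (1 <= i)%N ->
  (p%:Z ^+ i %| c - 1)%Z -> (p%:Z ^+ i.+1 %| c ^+ p - 1)%Z.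
Proof.
move=> i1 H; rewrite subrX1 exprSr; apply: dvdz_mul => //.
have Hp : (p%:Z %| c - 1)%Z.
  by apply: dvdz_trans H; rewrite -[X in (X %| _)%Z]expr1; apply: dvdz_exp2l.
have -> : \sum_(i < p) c ^+ i = \sum_(i < p) (c ^+ i - 1) + p%:Z.
  by rewrite sumrB sumr_const card_ord natz subrK.
rewrite rpredD ?dvdzz // rpred_sum // => j _.
exact: dvdz_trans Hp (D1 c j).
Qed.

Lemma liftk (p : nat) (c : int) : (p%:Z %| c - 1)%Z ->
  forall j, (p%:Z ^+ j.+1 %| c ^+ (p ^ j) - 1)%Z.
Proof.
move=> H; elim=> [|j IH]; first by rewrite expr1 expn0 expr1.
by rewrite expnSr exprM; apply: lift1.
Qed.

Lemma fermatz (p : nat) (a : int) : prime p -> coprimez a p%:Z ->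
  (p%:Z %| a ^+ p.-1 - 1)%Z.
Proof.
move=> pp cop.
have H : (p%:Z %| a ^+ p - a)%Z.
  rewrite -eqz_mod_dvd.
  have h0 : (0 <= (a %% p%:Z)%Z) by apply: modz_ge0; rewrite eqz_nat -lt0n prime_gt0.
  have [r Hr] : exists r : nat, (a %% p%:Z)%Z = r%:Z by exists `|(a %% p%:Z)%Z|%N; rewrite gez0_abs.
  rewrite -modzXm -[in X in _ == X]modz_mod Hr -PX !modz_nat fermat_little //.
move: H; have -> : a ^+ p - a = a * (a ^+ p.-1 - 1).
  by rewrite mulrBr mulr1 -exprS prednK // prime_gt0.
by rewrite Gauss_dvdzr // coprimez_sym.
Qed.
Lemma ord_ex (a M : int) (W : nat) : (0 < W)%N -> (M %| a ^+ W - 1)%Z ->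
  exists o : nat, [/\ (0 < o)%N, (M %| a ^+ o - 1)%Z &
     forall y : nat, (M %| a ^+ y - 1)%Z -> (o %| y)%N].
Proof.
move=> W0 HW.
have ex : exists y, (0 < y)%N && (M %| a ^+ y - 1)%Z by exists W; rewrite W0.
case: (ex_minnP ex) => o /andP[o0 Ho] omin.
exists o; split => // y Hy.
have Hr : (M %| a ^+ (y %% o) - 1)%Z.
  have E : a ^+ (y %% o) - 1 = (a ^+ y - 1) - ((a ^+ o) ^+ (y %/ o) - 1) * a ^+ (y %% o).
    have Ey : a ^+ y = (a ^+ o) ^+ (y %/ o) * a ^+ (y %% o).
      by rewrite -exprM -exprD mulnC -divn_eq.
    by rewrite Ey mulrBl mul1r opprB [RHS]addrC addrA subrK.
  rewrite E rpredB // dvdz_mulr //.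
  exact: dvdz_trans Ho (D1 _ _).
apply/eqP; apply/eqP; rewrite /dvdn; apply/negPn/negP => r0.
have := omin (y %% o)%N; rewrite lt0n r0 Hr => /(_ isT).
by rewrite leqNgt ltn_pmod.
Qed.

Lemma evconst (f : nat -> nat) (s D : nat) :
  (forall m n, (s <= m)%N -> (m <= n)%N -> (f m <= f n)%N) ->
  (forall n, (s <= n)%N -> (f n <= D)%N) ->
  exists N, (s <= N)%N /\ forall n, (N <= n)%N -> f n = f N.
Proof.
move=> mono bnd.
suff: forall c t, (s <= t)%N -> (D - f t <= c)%N ->
   exists N, (s <= N)%N /\ forall n, (N <= n)%N -> f n = f N.
  by move=> /(_ (D - f s)%N s (leqnn _) (leqnn _)).
elim=> [|c IH] t st.
  rewrite leqn0 subn_eq0 => Dt; exists t; split => // n tn.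
  apply/eqP; rewrite eqn_leq [X in _ && X]mono // andbT.
  by apply: leq_trans (bnd _ _) Dt; apply: leq_trans tn.
move=> Hc.
case: (classic (exists n, (t <= n)%N /\ f n <> f t)) => [[n [tn fn]]|nex].
  have sn : (s <= n)%N by apply: leq_trans tn.
  have lt : (f t < f n)%N by rewrite ltn_neqAle mono // andbT; apply/eqP => e; apply: fn.
  apply: (IH n sn).
  rewrite -ltnS; apply: leq_trans Hc.
  rewrite ltn_sub2l //; apply: leq_trans lt (bnd _ sn).
exists t; split => // n tn.
by apply: NNPP => h; apply: nex; exists n.
Qed.

Theorem mainTheorem1 (p : nat) (a b : int) (x : nat -> nat) :
  prime p -> coprimez a p%:Z -> coprimez b p%:Z -> a != 1 ->
  (forall n : nat, (1 <= n)%N -> is_least_dlog p a b n (x n)) ->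
  padic_converges p (fun n => (x n)%:Z).
Proof.
move=> pp cap cbp a1 Hx.
have p1 : (1 < p)%N := prime_gt1 pp.
have modm : forall m n (z : int), (m <= n)%N -> (z == b %[mod (p ^ n)%:Z])%Z ->
    (z == b %[mod (p ^ m)%:Z])%Z.
  move=> m n z mn; rewrite !eqz_mod_dvd => H; apply: dvdz_trans H.
  by rewrite !PX; apply: dvdz_exp2l.
have mono : forall m n, (1 <= m)%N -> (m <= n)%N -> (x m <= x n)%N.
  move=> m n m1 mn; have [_ [_ Hm]] := Hx m m1.
  have [xn0 [Hn _]] := Hx n (leq_trans m1 mn).
  by apply: Hm => //; apply: modm Hn.
have cauchy : forall k, exists N, (1 <= N)%N /\ forall n, (N <= n)%N ->
    ((x n)%:Z == (x N)%:Z %[mod (p ^ k)%:Z])%Z.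
  case: (classic (exists D, (0 < D)%N /\ a ^+ D = 1)) => [[D [D0 aD]]|nD] k.
    have bnd : forall n, (1 <= n)%N -> (x n <= D)%N.
      move=> n n1; have [xn0 [Hn Hmin]] := Hx n n1.
      rewrite leqNgt; apply/negP => Dx.
      have y0 : (0 < x n - D)%N by rewrite subn_gt0.
      have := Hmin _ y0.
      have -> : a ^+ (x n - D) = a ^+ (x n).
        by rewrite -[in RHS](subnK (ltnW Dx)) exprD aD mulr1.
      move=> /(_ Hn); rewrite leqNgt => /negP; apply.
      by rewrite ltn_subrL D0 xn0.
    have [N [N1 HN]] := @evconst x 1 D mono bnd.
    by exists N; split => // n Nn; rewrite (HN n Nn).
  have pm0 : (0 < p.-1)%N by rewrite -subn1 subn_gt0.
  pose D := (p.-1 * p ^ k)%N.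
  have aD : a ^+ D - 1 != 0.
    by rewrite subr_eq0; apply/eqP => h; apply: nD; exists D; rewrite muln_gt0 pm0 expn_gt0 prime_gt0.
  pose m := `|a ^+ D - 1|%N.
  have m1 : (1 <= m)%N by rewrite absz_gt0.
  have nm : ~~ (p%:Z ^+ m %| a ^+ D - 1)%Z.
    apply/negP; rewrite dvdzE abszX /= => /dvdn_leq; rewrite absz_gt0 => /(_ aD).
    by rewrite leqNgt ltn_expl.
  have HW : (p%:Z ^+ m %| a ^+ (p.-1 * p ^ m) - 1)%Z.
    rewrite exprM; apply: dvdz_trans (@liftk p (a ^+ p.-1) (@fermatz p a pp cap) m).
    exact: dvdz_exp2l.
  have [o [o0 Ho omin]] := @ord_ex a (p%:Z ^+ m) (p.-1 * p ^ m)%N ltac:(by rewrite muln_gt0 pm0 expn_gt0 prime_gt0) HW.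
  have pko : (p ^ k %| o)%N.
    have oW : (o %| p.-1 * p ^ m)%N := omin _ HW.
    have og : (o %| gcdn o (p ^ m) * p.-1)%N.
      by rewrite muln_gcdl dvdn_gcd dvdn_mulr //= mulnC.
    case/(dvdn_pfactor _ _ pp): (dvdn_gcdr o (p ^ m)) => j jm gj.
    case: (leqP k j) => kj.
      by apply: dvdn_trans (dvdn_gcdl o (p ^ m)); rewrite gj; exact: dvdn_exp2l.
    exfalso; move/negP: nm; apply.
    have oD : (o %| D)%N.
      apply: dvdn_trans og _; rewrite gj /D [(p.-1 * _)%N]mulnC.
      by apply: dvdn_mul => //; apply: dvdn_exp2l; apply: ltnW.
    rewrite -(divnK oD) mulnC exprM; exact: dvdz_trans Ho (D1 _ _).
  exists m; split => // n mn.
  have [xm0 [Hm Hmin]] := Hx m m1.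
  have [xn0 [Hn _]] := Hx n (leq_trans m1 mn).
  have xmn := mono m n m1 mn.
  have Hy : (p%:Z ^+ m %| a ^+ (x n - x m) - 1)%Z.
    have Hd : (p%:Z ^+ m %| a ^+ (x m) * (a ^+ (x n - x m) - 1))%Z.
      rewrite mulrBr mulr1 -exprD subnKC //.
      have := modm _ _ _ mn Hn; move: Hm; rewrite !eqz_mod_dvd -!PX => h1 h2.
      have -> : a ^+ x n - a ^+ x m = (a ^+ x n - b) - (a ^+ x m - b).
        by rewrite [in RHS]opprB [in RHS]addrA subrK.
      by rewrite rpredB.
    have cop : coprimez (p%:Z ^+ m) (a ^+ x m).
      by apply/coprimezXl/coprimezXr; rewrite coprimez_sym.
    by rewrite Gauss_dvdzr in Hd.
  have := dvdn_trans pko (omin _ Hy).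
  by rewrite eqz_mod_dvd subzn // dvdzE /=.
have [Nf HN] : exists Nf : nat -> nat, forall k, (1 <= Nf k)%N /\ forall n, (Nf k <= n)%N ->
    ((x n)%:Z == (x (Nf k))%:Z %[mod (p ^ k)%:Z])%Z.
  exists (fun k => proj1_sig (constructive_indefinite_description _ (cauchy k))).
  by move=> k; exact: proj2_sig (constructive_indefinite_description _ (cauchy k)).
pose Nm k := (\sum_(i < k.+1) Nf i)%N.
have fm : forall k, (Nf k <= Nm k)%N by move=> k; rewrite /Nm big_ord_recr /= leq_addl.
have mm : forall k, (Nm k <= Nm k.+1)%N by move=> k; rewrite {2}/Nm big_ord_recr /= leq_addr.
exists (fun k => (x (Nm k))%:Z); split.
  move=> k; have [_ H] := HN k.
  rewrite (eqP (H _ (leq_trans (fm k) (mm k)))) (eqP (H _ (fm k))) //.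
move=> k; exists (Nm k) => n kn; have [_ H] := HN k.
by rewrite (eqP (H _ (leq_trans (fm k) kn))) (eqP (H _ (fm k))).
Qed.
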